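(* For every $q\in X^*\setminus\{e\}$, the set of $\omega$-words $\xi\in X^\omega$ that are quasiperiodic with quasiperiod $q$ equals $P_q^\omega$.
   Context: $X$ is a finite alphabet with $|X|\ge 2$; $X^*$ the finite words (empty word $e$), $X^\omega$ the infinite words. $w\sqsubseteq\eta$ means $w$ is a prefix of $\eta$, $w\sqsubset\eta$ a proper prefix. For a language $L$, $L^\omega:=\{w_1w_2\cdots : w_i\in L\setminus\{e\}\}$. An $\omega$-word $\xi$ is quasiperiodic with quasiperiod $q$ if for every $j\in\mathbb{N}$ there is a prefix $u_j\sqsubseteq\xi$ with $j-|q|<|u_j|\le j$ and $u_j\cdot q\sqsubseteq\xi$. $P_q:=\{v: e\sqsubset v\sqsubseteq q\sqsubset v\cdot q\}$. *)

(* Defs.v *)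
From mathcomp Require Import all_boot.
Set Implicit Arguments. Unset Strict Implicit. Unset Printing Implicit Defensive.

Definition wprefix (X : finType) (w : seq X) (xi : nat -> X) : Prop :=
  w = mkseq xi (size w).

Definition pprefix (X : finType) (v w : seq X) : bool :=
  prefix v w && (v != w).

Definition quasiperiodic (X : finType) (xi : nat -> X) (q : seq X) : Prop :=
  forall j : nat, exists u : seq X,
    wprefix u xi /\ j < size u + size q /\ size u <= j /\ wprefix (u ++ q) xi.

Definition Pq (X : finType) (q : seq X) (v : seq X) : Prop :=
  pprefix [::] v /\ prefix v q /\ pprefix q (v ++ q).

Definition omega_power (X : finType) (L : seq X -> Prop) (xi : nat -> X) : Prop :=
  exists w : nat -> seq X,
    (forall i, L (w i) /\ w i <> [::]) /\
    (forall n, wprefix (flatten [seq w i | i <- iota 0 n]) xi).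

(* Main.v *)
From Stdlib Require Import ClassicalEpsilon.
Require Import Defs.
From mathcomp Require Import all_boot.


Set Implicit Arguments. Unset Strict Implicit.

Section Aux.
Variable X : finType.
Variable xi : nat -> X.

Definition sub (a b : nat) : seq X := mkseq (fun i => xi (a + i)) b.

Lemma size_sub a b : size (sub a b) = b.
Proof. by rewrite /sub size_mkseq. Qed.

Lemma sub_add a b c : sub a (b + c) = sub a b ++ sub (a + b) c.
Proof.
rewrite /sub /mkseq iotaD map_cat; congr (_ ++ _).
rewrite add0n.
have -> : iota b c = map (addn b) (iota 0 c) by rewrite -iotaDl addn0.
rewrite -map_comp; apply: eq_map => i /=; by rewrite addnA.
Qed.

Lemma wprefixE s : wprefix s xi <-> s = sub 0 (size s).
Proof.
rewrite /wprefix /sub.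
have -> : mkseq xi (size s) = mkseq (fun i => xi (0 + i)) (size s).
  by apply: eq_map => i.
by [].
Qed.

Lemma occE k (q : seq X) : wprefix (sub 0 k ++ q) xi <-> sub k (size q) = q.
Proof.
rewrite wprefixE size_cat size_sub sub_add add0n; split.
  by move/eqP; rewrite eqseq_cat ?size_sub // eqxx /= => /eqP <-.
by move=> ->.
Qed.

Lemma prefix_sub s m : prefix s (sub 0 m) -> s = sub 0 (size s).
Proof.
move=> Hp; have Hs := size_prefix Hp; rewrite size_sub in Hs.
move/prefixP: Hp => [t Ht].
move: Ht; rewrite -(subnKC Hs) sub_add => Ht.
have := congr1 (take (size s)) Ht.
by rewrite !take_size_cat ?size_sub.
Qed.

Lemma sub_swap a d m : sub a d ++ sub (a + d) m = sub a m ++ sub (a + m) d.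
Proof. by rewrite -!sub_add addnC. Qed.

End Aux.

Definition Fl (X : finType) (w : nat -> seq X) n := flatten [seq w i | i <- iota 0 n].

Lemma FlS (X : finType) (w : nat -> seq X) n : Fl w n.+1 = Fl w n ++ w n.
Proof. by rewrite /Fl -addn1 iotaD map_cat flatten_cat /= cats0. Qed.

Theorem mainTheorem5 (X : finType) (hX : 1 < #|X|) (q : seq X) (hq : q != [::]) :
  forall xi : nat -> X, quasiperiodic xi q <-> omega_power (Pq q) xi.
Proof.
move=> xi; split.
- move=> H.
  pose g j := proj1_sig (constructive_indefinite_description _ (H j)).
  have Hg j : [/\ g j = sub xi 0 (size (g j)), j < size (g j) + size q,
        size (g j) <= j & sub xi (size (g j)) (size q) = q].
    rewrite /g; case: (constructive_indefinite_description _ (H j)) => u /=.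
    by move=> [/wprefixE A [B [C D]]]; move: D; rewrite {1}A => /occE.
  pose pos := fix pos n := if n is n'.+1 then size (g (pos n' + size q)) else 0.
  have posS n : pos n.+1 = size (g (pos n + size q)) by [].
  have Hocc n : sub xi (pos n) (size q) = q.
    case: n => [|n]; last by rewrite posS; case: (Hg (pos n + size q)).
    case: (Hg 0) => _ _; rewrite leqn0 => /eqP E; by rewrite E.
  have Hlt n : pos n < pos n.+1 <= pos n + size q.
    rewrite posS; case: (Hg (pos n + size q)) => _ A B _.
    by rewrite B andbT -(ltn_add2r (size q)).
  pose w n := sub xi (pos n) (pos n.+1 - pos n).
  exists w; split.
  + move=> n; have /andP[A B] := Hlt n.
    have Hd : 0 < pos n.+1 - pos n by rewrite subn_gt0.
    have Hdq : pos n.+1 - pos n <= size q by rewrite leq_subLR.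
    have Hsw : size (w n) = pos n.+1 - pos n by rewrite size_sub.
    have Hwne : w n != [::] by rewrite -size_eq0 Hsw -lt0n.
    split; last by apply/eqP.
    split; first by rewrite /pprefix prefix0s /= eq_sym.
    split.
      rewrite -[in X in prefix _ X](Hocc n) -(subnKC Hdq) sub_add; exact: prefix_prefix.
    rewrite /pprefix; apply/andP; split.
      have Ed : pos n + (pos n.+1 - pos n) = pos n.+1 := subnKC (ltnW A).
      have := sub_swap xi (pos n) (pos n.+1 - pos n) (size q).
      rewrite Ed !Hocc /w => ->; exact: prefix_prefix.
    apply/negP => /eqP E; have := congr1 size E; rewrite size_cat Hsw.
    by move/eqP; rewrite -{1}(add0n (size q)) eqn_add2r => /eqP E0; rewrite -E0 in Hd.
  + have HF n : Fl w n = sub xi 0 (pos n).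
      elim: n => [|n IH]; first by [].
      have /andP[A _] := Hlt n.
      have := sub_add xi 0 (pos n) (pos n.+1 - pos n).
      rewrite add0n subnKC ?(ltnW A) // => E.
      rewrite (FlS w n) IH E //.
    move=> n; apply/wprefixE; rewrite -/(Fl w n) HF size_sub //.
- move=> [w [HP HF]].
  have H2 n : Fl w n = sub xi 0 (size (Fl w n)) by apply/wprefixE; exact: HF.
  have Hpq n : prefix q (w n ++ q).
    by case: (HP n) => [[_ [_ /andP[]]]].
  have Hwq n : size (w n) <= size q.
    by case: (HP n) => [[_ [/size_prefix]]].
  have Hw0 n : 0 < size (w n).
    by case: (HP n) => _ /eqP; rewrite -size_eq0 lt0n.
  have Key k n : prefix (Fl w n ++ q) (Fl w (n + k) ++ q).
    elim: k => [|k IH]; first by rewrite addn0 prefix_refl.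
    rewrite addnS FlS; move/prefixP: (Hpq (n + k)) => [r Hr].
    rewrite -catA Hr catA; apply: prefix_trans IH _; exact: prefix_prefix.
  have Hsz k n : size (Fl w n) + k <= size (Fl w (n + k)).
    elim: k => [|k IH]; first by rewrite !addn0.
    rewrite !addnS FlS size_cat -addn1; apply: leq_add => //; exact: Hw0.
  have Hocc n : Fl w n ++ q = sub xi 0 (size (Fl w n ++ q)).
    apply: (@prefix_sub _ xi _ (size (Fl w (n + size q)))).
    rewrite -H2.
    have := Key (size q) n; rewrite !prefixE takel_cat //.
    by rewrite size_cat; exact: Hsz.
  have Hj j : exists n, size (Fl w n) <= j < size (Fl w n.+1).
    elim: j => [|j [n /andP[A B]]].
      by exists 0; rewrite (FlS w 0) size_cat /= Hw0.
    case: (ltnP j.+1 (size (Fl w n.+1))) => C.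
      by exists n; rewrite C andbT; apply: leq_trans A _.
    exists n.+1; have E : j.+1 = size (Fl w n.+1) by apply/eqP; rewrite eqn_leq B C.
    by rewrite E leqnn (FlS w n.+1) size_cat -addn1 leq_add2l Hw0.
  move=> j; case: (Hj j) => n /andP[A B]; exists (Fl w n).
  split; first by apply/wprefixE.
  split; first by apply: leq_trans B _; rewrite FlS size_cat leq_add2l Hwq.
  by split=> //; apply/wprefixE.
Qed.
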